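(* Let $\alpha,\beta\in\mathbb{R}$ and consider the Sharma-Mittal entropy $S_{\alpha,\beta}$ on $\mathcal{P}_n$. Then $S_{\alpha,\beta}$ is Schur-concave if $\alpha\ge 0$, and Schur-convex if $\alpha<0$ (in the latter case on the set of probability vectors with all entries strictly positive).
   Context: Let $\mathcal{P}_n=\{\mathbf{p}=(p_1,\dots,p_n): p_i\ge 0,\ \sum_i p_i=1\}$. For $\mathbf{p},\mathbf{q}\in\mathcal{P}_n$ with components sorted in non-increasing order, $\mathbf{p}\preceq\mathbf{q}$ ($\mathbf{p}$ is majorized by $\mathbf{q}$) means $\sum_{i=1}^k p_i\le\sum_{i=1}^k q_i$ for $k=1,\dots,n$ (applied to the non-increasing rearrangements). A function $\phi$ is Schur-convex if $\mathbf{p}\preceq\mathbf{q}$ implies $\phi(\mathbf{p})\le\phi(\mathbf{q})$, and Schur-concave if $-\phi$ is Schur-convex. The Sharma-Mittal entropy is $S_{\alpha,\beta}(\mathbf{p})=\frac{1}{1-\beta}\left[\left(\sum_{i=1}^n p_i^\alpha\right)^{\frac{1-\beta}{1-\alpha}}-1\right]$, with the values at $\alpha=1$ and/or $\beta=1$ defined by the corresponding limits. When $\alpha<0$ it is assumed that all $p_i>0$, so that the entropy is well-defined. *)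

(* Defs.v *)
From HB Require Import structures.
From mathcomp Require Import all_boot all_order all_algebra.
From mathcomp Require Import all_classical all_reals all_analysis.
Set Implicit Arguments. Unset Strict Implicit. Unset Printing Implicit Defensive.
Import Order.TTheory GRing.Theory Num.Theory.
Local Open Scope ring_scope.

Definition prob_vec (R : realType) (n : nat) (p : 'I_n -> R) : Prop :=
  (forall i, 0 <= p i) /\ \sum_(i < n) p i = 1.

Definition pos_vec (R : realType) (n : nat) (p : 'I_n -> R) : Prop :=
  forall i, 0 < p i.

Definition decr (R : realType) (n : nat) (p : 'I_n -> R) : seq R :=
  sort (fun x y : R => y <= x) [seq p i | i <- enum 'I_n].

Definition majorized (R : realType) (n : nat) (p q : 'I_n -> R) : Prop :=
  forall k : nat, (k <= n)%N ->
    \sum_(0 <= i < k) nth 0 (decr p) i <= \sum_(0 <= i < k) nth 0 (decr q) i.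

Definition schur_convex_on (R : realType) (n : nat)
    (D : ('I_n -> R) -> Prop) (phi : ('I_n -> R) -> R) : Prop :=
  forall p q, D p -> D q -> majorized p q -> phi p <= phi q.

Definition schur_concave_on (R : realType) (n : nat)
    (D : ('I_n -> R) -> Prop) (phi : ('I_n -> R) -> R) : Prop :=
  schur_convex_on D (fun p => - phi p).

(* Shannon entropy (natural log; ln 0 = 0 in the library, so 0 ln 0 = 0). *)
Definition shannon (R : realType) (n : nat) (p : 'I_n -> R) : R :=
  - \sum_(i < n) p i * ln (p i).

(* Sharma-Mittal entropy, with the values at alpha = 1 and/or beta = 1
   given by the corresponding limits (written out explicitly). *)
Definition sharma_mittal (R : realType) (n : nat) (alpha beta : R)
    (p : 'I_n -> R) : R :=
  let s := \sum_(i < n) powR (p i) alpha in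
  if alpha == 1 then
    if beta == 1 then shannon p
    else (1 - beta)^-1 * (expR ((1 - beta) * shannon p) - 1)
  else
    if beta == 1 then (1 - alpha)^-1 * ln s
    else (1 - beta)^-1 * (powR s ((1 - beta) / (1 - alpha)) - 1).

(* Main.v *)
Require Import Defs.
From HB Require Import structures.
From mathcomp Require Import all_boot all_order all_algebra.
From mathcomp Require Import all_classical all_reals all_analysis.
From mathcomp Require Import ring lra.
Import Order.TTheory GRing.Theory Num.Theory.
Local Open Scope ring_scope.



Section K.
Variable R : realType.

Lemma abel_aux (x y c : nat -> R) (N : nat) :
  (forall k, (k <= N)%N -> \sum_(0 <= i < k) x i <= \sum_(0 <= i < k) y i) ->
  (forall i, (i.+1 < N)%N -> c i.+1 <= c i) ->
  forall m, (m <= N)%N ->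
  c m.-1 * (\sum_(0 <= i < m) y i - \sum_(0 <= i < m) x i)
    <= \sum_(0 <= i < m) c i * (y i - x i).
Proof.
move=> HD Hc; elim=> [|m IH] Hm.
  by rewrite !big_geq // subrr mulr0.
rewrite !big_nat_recr //=.
have IH' := IH (ltnW Hm).
have HDm := HD m (ltnW Hm).
have Hcm : c m <= c m.-1.
  case: m IH Hm IH' HDm => [|m] _ Hm _ _ //=.
  by apply: Hc.
set X := \sum_(0 <= i < m) x i in IH' HDm *.
set Y := \sum_(0 <= i < m) y i in IH' HDm *.
set S := \sum_(0 <= i < m) c i * (y i - x i) in IH' *.
nra.
Qed.

Lemma abel (x y c : nat -> R) (N : nat) :
  (forall k, (k <= N)%N -> \sum_(0 <= i < k) x i <= \sum_(0 <= i < k) y i) ->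
  \sum_(0 <= i < N) x i = \sum_(0 <= i < N) y i ->
  (forall i, (i.+1 < N)%N -> c i.+1 <= c i) ->
  0 <= \sum_(0 <= i < N) c i * (y i - x i).
Proof.
move=> HD HN Hc; have := @abel_aux x y c N HD Hc N (leqnn N).
by rewrite HN subrr mulr0.
Qed.
End K.



Section K2.
Variable R : realType.
Variable n : nat.

Lemma size_decr (p : 'I_n -> R) : size (decr p) = n.
Proof. by rewrite /decr size_sort size_map size_enum_ord. Qed.

Lemma sum_decr (p : 'I_n -> R) (f : R -> R) :
  \sum_(i < n) f (p i) = \sum_(0 <= i < n) f (nth 0 (decr p) i).
Proof.
have -> : \sum_(0 <= i < n) f (nth 0 (decr p) i) = \sum_(0 <= i < size (decr p)) f (nth 0 (decr p) i) by rewrite size_decr.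
have -> : \sum_(0 <= i < size (decr p)) f (nth 0 (decr p) i) = \sum_(v <- decr p) f v.
  by rewrite [RHS](big_nth 0).
rewrite /decr.
rewrite (perm_big _ (permEl (perm_sort _ _))) big_map big_enum /=.
by apply: eq_bigl => i; rewrite inE.
Qed.

Lemma decr_mem (p : 'I_n -> R) i : (i < n)%N -> exists j, nth 0 (decr p) i = p j.
Proof.
move=> Hi.
have : nth 0 (decr p) i \in decr p by rewrite mem_nth // size_decr.
rewrite /decr mem_sort => /mapP [j _ ->]; by exists j.
Qed.

Lemma decr_mono (p : 'I_n -> R) i j : (i <= j)%N -> (j < n)%N ->
  nth 0 (decr p) j <= nth 0 (decr p) i.
Proof.
move=> Hij Hj.
have Hs : sorted (fun x y : R => y <= x) (decr p).
  by apply: sort_sorted => x y; exact: le_total.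
have := @sorted_leq_nth _ (fun x y : R => y <= x) _ _ 0 (decr p) Hs i j.
apply => //; rewrite ?inE ?size_decr //; try exact: leq_ltn_trans Hj.
by move=> a b c /= H1 H2; exact: le_trans H2 H1.
Qed.

Lemma karamata (p q : 'I_n -> R) (Q : R -> Prop) (phi g : R -> R) :
  prob_vec p -> prob_vec q -> majorized p q -> (forall i, Q (q i)) ->
  (forall a b, 0 < a -> Q b -> g a * (b - a) <= phi b - phi a) ->
  (forall a b, 0 < b -> b <= a -> g b <= g a) ->
  \sum_(i < n) phi (p i) <= \sum_(i < n) phi (q i).
Proof.
move=> [p0 p1] [q0 q1] Hm HQ Hsup Hg.
rewrite !sum_decr.
have x0 : forall i, (i < n)%N -> 0 <= nth 0 (decr p) i.
  by move=> i Hi; case: (decr_mem p i Hi) => j ->.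
have y0 : forall i, (i < n)%N -> 0 <= nth 0 (decr q) i.
  by move=> i Hi; case: (decr_mem q i Hi) => j ->.
have yQ : forall i, (i < n)%N -> Q (nth 0 (decr q) i).
  by move=> i Hi; case: (decr_mem q i Hi) => j ->.
have Xn : \sum_(0 <= i < n) nth 0 (decr p) i = 1.
  by rewrite -[RHS]p1 (sum_decr p (fun v => v)).
have Yn : \sum_(0 <= i < n) nth 0 (decr q) i = 1.
  by rewrite -[RHS]q1 (sum_decr q (fun v => v)).
have tail : forall i, (i < n)%N -> nth 0 (decr p) i = 0 -> nth 0 (decr q) i = 0.
  move=> i Hi xi0.
  have Xi : \sum_(0 <= j < i) nth 0 (decr p) j = 1.
    rewrite -Xn (big_cat_nat (leq0n i) (ltnW Hi)) /=.
    have -> : \sum_(i <= j < n) nth 0 (decr p) j = 0.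
      rewrite big_nat_cond big1 // => j /andP[/andP[Hij Hjn] _].
      apply: le_anti; rewrite x0 // andbT; apply: le_trans (decr_mono p i j Hij Hjn) _; by rewrite xi0.
    by rewrite addr0.
  have Yi1 : \sum_(0 <= j < i.+1) nth 0 (decr q) j <= 1.
    rewrite -Yn (big_cat_nat (leq0n i.+1) Hi) /= lerDl.
    rewrite big_nat_cond; apply: sumr_ge0 => j /andP[/andP[_ Hj] _]; exact: y0.
  have HmI := Hm i (ltnW Hi).
  rewrite big_nat_recr //= in Yi1.
  apply: le_anti; rewrite y0 // andbT; lra.
pose M := \sum_(0 <= j < n) `|g (nth 0 (decr p) j)|.
pose c i := if 0 < nth 0 (decr p) i then g (nth 0 (decr p) i) else - M.
have gM : forall i, (i < n)%N -> - M <= g (nth 0 (decr p) i).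
  move=> i Hi.
  have : `|g (nth 0 (decr p) i)| <= M.
    rewrite /M (big_cat_nat (leq0n i) (ltnW Hi)) /= (big_ltn Hi) /=.
    have h1 : 0 <= \sum_(0 <= j < i) `|g (nth 0 (decr p) j)| by apply: sumr_ge0.
    have h2 : 0 <= \sum_(i.+1 <= j < n) `|g (nth 0 (decr p) j)| by apply: sumr_ge0.
    lra.
  have := ler_norm (- g (nth 0 (decr p) i)); rewrite normrN; lra.
have Hc : forall i, (i.+1 < n)%N -> c i.+1 <= c i.
  move=> i Hi; rewrite /c.
  case: ifP => H1.
    have Hx : nth 0 (decr p) i.+1 <= nth 0 (decr p) i by apply: decr_mono.
    rewrite (lt_le_trans H1 Hx); exact: Hg.
  case: ifP => _ //; exact: gM (ltnW Hi).
have Hpt : forall i, (i < n)%N ->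
    c i * (nth 0 (decr q) i - nth 0 (decr p) i) <=
    phi (nth 0 (decr q) i) - phi (nth 0 (decr p) i).
  move=> i Hi; rewrite /c; case: ifP => H1; first by apply: Hsup => //; exact: yQ.
  have xi0 : nth 0 (decr p) i = 0.
    by apply: le_anti; rewrite x0 // andbT leNgt H1.
  by rewrite (tail i Hi xi0) xi0 !subrr mulr0.
have Hab := @abel R (fun i => nth 0 (decr p) i) (fun i => nth 0 (decr q) i) c n Hm
  (etrans Xn (esym Yn)) Hc.
rewrite -subr_ge0 -sumrB; apply: (le_trans Hab).
by apply: ler_sum_nat => i /= Hi; exact: Hpt.
Qed.
End K2.



Section C.
Variable R : realType.

Lemma bern_lt1 (b u : R) : 0 < b -> b < 1 -> 0 <= u ->
  powR u b <= b * u + (1 - b).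
Proof.
move=> b0 b1 u0.
have b10 : 0 < 1 - b by lra.
have ib0 : 0 < b^-1 by rewrite invr_gt0.
have ib10 : 0 < (1 - b)^-1 by rewrite invr_gt0.
have := @conjugate_powR R (powR u b) 1 b^-1 (1 - b)^-1 (powR_ge0 _ _) ler01
  ib0 ib10.
rewrite !invrK mulr1 addrC subrK => /(_ erefl).
rewrite -powRrM mulfV ?gt_eqF // powRr1 // powR1 => H; lra.
Qed.

Lemma bern_gt1 (a t : R) : 1 < a -> 0 <= t -> 1 + a * (t - 1) <= powR t a.
Proof.
move=> a1 t0.
have a0 : 0 < a by lra.
have ia0 : 0 < a^-1 by rewrite invr_gt0.
have ia1 : a^-1 < 1 by rewrite invf_lt1.
have := @bern_lt1 a^-1 (powR t a) ia0 ia1 (powR_ge0 t a).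
rewrite -powRrM mulfV ?gt_eqF // powRr1 // => H.
have Ha : a * a^-1 = 1 by rewrite mulfV ?gt_eqF.
nra.
Qed.

Lemma bern_neg (a t : R) : a < 0 -> 0 < t -> 1 + a * (t - 1) <= powR t a.
Proof.
move=> a0 t0.
rewrite /powR gt_eqF //.
have H1 := expR_ge1Dx (a * ln t).
have H2 : ln t <= t - 1.
  have := @le_ln1Dx R (t - 1); rewrite addrCA subrr addr0; apply; lra.
nra.
Qed.

Lemma homog (a b c : R) : 0 < a -> 0 <= b ->
  powR b c = powR a c * powR (b / a) c /\
  c * powR a (c - 1) * (b - a) = powR a c * (c * (b / a - 1)).
Proof.
move=> a0 b0; split.
  rewrite -powRM; [by rewrite mulrC divfK // gt_eqF | exact: ltW | exact: divr_ge0 b0 (ltW a0)].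
rewrite powRB; last by apply/implyP => _; rewrite gt_eqF.
rewrite powRr1 ?(ltW a0) //; field; exact: lt0r_neq0.
Qed.

Lemma powR_anti (r a b : R) : r <= 0 -> 0 < b -> b <= a -> powR a r <= powR b r.
Proof.
move=> r0 b0 ba.
have a0 : 0 < a by exact: lt_le_trans b0 ba.
have -> : r = - (- r) by rewrite opprK.
rewrite (powRN a (- r)) (powRN b (- r)) lef_pV2 ?posrE ?powR_gt0 //.
apply: ge0_ler_powR; rewrite ?nnegrE; lra.
Qed.

Lemma sup_convex (c a b : R) : (1 < c \/ (c < 0 /\ 0 < b)) -> 0 < a -> 0 <= b ->
  c * powR a (c - 1) * (b - a) <= powR b c - powR a c.
Proof.
move=> hc a0 b0; have [-> ->] := @homog a b c a0 b0.
have A0 : 0 < powR a c by apply: powR_gt0.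
have t0 : 0 <= b / a by apply: divr_ge0; lra.
have H : 1 + c * (b / a - 1) <= powR (b / a) c.
  case: hc => [c1|[c0 bpos]]; first exact: bern_gt1.
  by apply: bern_neg; rewrite ?divr_gt0.
nra.
Qed.

Lemma sup_concave (c a b : R) : 0 < c -> c < 1 -> 0 < a -> 0 <= b ->
  - (c * powR a (c - 1)) * (b - a) <= - powR b c - - powR a c.
Proof.
move=> c0 c1 a0 b0; rewrite mulNr.
have [-> ->] := @homog a b c a0 b0.
have A0 : 0 < powR a c by apply: powR_gt0.
have t0 : 0 <= b / a by apply: divr_ge0; lra.
have H := @bern_lt1 c (b / a) c0 c1 t0.
nra.
Qed.

Lemma sup_xlnx (a b : R) : 0 < a -> 0 <= b ->
  (ln a + 1) * (b - a) <= b * ln b - a * ln a.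
Proof.
move=> a0; rewrite le_eqVlt => /predU1P[<-|b0].
  rewrite mul0r; nra.
have H : ln (a / b) <= a / b - 1.
  have := @le_ln1Dx R (a / b - 1); rewrite addrCA subrr addr0; apply.
  have : 0 < a / b by apply: divr_gt0.
  lra.
rewrite ln_div ?posrE // in H.
have Hb : b * (a / b) = a by field; exact: lt0r_neq0.
nra.
Qed.

End C.



Section D.
Variable R : realType.
Variable n : nat.

Lemma sumpow_gt1 (a : R) (p q : 'I_n -> R) : 1 < a -> prob_vec p -> prob_vec q ->
  majorized p q -> \sum_i powR (p i) a <= \sum_i powR (q i) a.
Proof.
move=> a1 Pp Pq Hm.
apply: (@karamata R n p q (fun b => 0 <= b) (fun x => powR x a)
  (fun x => a * powR x (a - 1)) Pp Pq Hm).
- by move=> i; case: Pq.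
- by move=> x y x0 y0; apply: sup_convex => //; left.
- move=> x y y0 yx /=.
  have : powR y (a - 1) <= powR x (a - 1).
    by apply: ge0_ler_powR; rewrite ?nnegrE; lra.
  nra.
Qed.

Lemma sumpow_neg (a : R) (p q : 'I_n -> R) : a < 0 -> prob_vec p -> prob_vec q ->
  pos_vec q -> majorized p q -> \sum_i powR (p i) a <= \sum_i powR (q i) a.
Proof.
move=> a0 Pp Pq pq Hm.
apply: (@karamata R n p q (fun b => 0 < b) (fun x => powR x a)
  (fun x => a * powR x (a - 1)) Pp Pq Hm).
- by move=> i; apply: pq.
- by move=> x y x0 y0; apply: sup_convex => //; [right | apply: ltW].
- move=> x y y0 yx /=.
  have : powR x (a - 1) <= powR y (a - 1) by apply: powR_anti => //; lra.
  nra.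
Qed.

Lemma sumpow_lt1 (a : R) (p q : 'I_n -> R) : 0 < a -> a < 1 -> prob_vec p -> prob_vec q ->
  majorized p q -> \sum_i powR (q i) a <= \sum_i powR (p i) a.
Proof.
move=> a0 a1 Pp Pq Hm.
have := (@karamata R n p q (fun b => 0 <= b) (fun x => - powR x a)
  (fun x => - (a * powR x (a - 1))) Pp Pq Hm).
rewrite !sumrN lerN2; apply.
- by move=> i; case: Pq.
- by move=> x y x0 y0 /=; apply: sup_concave.
- move=> x y y0 yx /=.
  have : powR x (a - 1) <= powR y (a - 1) by apply: powR_anti => //; lra.
  nra.
Qed.

Lemma ent_le (p q : 'I_n -> R) : prob_vec p -> prob_vec q ->
  majorized p q -> shannon q <= shannon p.
Proof.
move=> Pp Pq Hm; rewrite /shannon lerN2.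
apply: (@karamata R n p q (fun b => 0 <= b) (fun x => x * ln x)
  (fun x => ln x + 1) Pp Pq Hm).
- by move=> i; case: Pq.
- by move=> x y x0 y0 /=; apply: sup_xlnx.
- move=> x y y0 yx /=; rewrite lerD2r ler_ln ?posrE //; exact: lt_le_trans yx.
Qed.

Lemma sumpow_gt0 (a : R) (p : 'I_n -> R) : prob_vec p -> 0 < \sum_i powR (p i) a.
Proof.
move=> [p0 p1].
case: (pselect (exists i, 0 < p i)) => [[i pi]|H].
  rewrite (bigD1 i) //=.
  have h1 := powR_gt0 a pi.
  have h2 : 0 <= \sum_(j | j != i) powR (p j) a by apply: sumr_ge0 => j _; exact: powR_ge0.
  lra.
exfalso.
have : \sum_(i < n) p i = 0.
  apply: big1 => i _; apply: le_anti; rewrite p0 andbT leNgt; apply/negP => Hi.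
  by apply: H; exists i.
by rewrite p1 => /eqP; rewrite oner_eq0.
Qed.

Definition kf (a b s : R) :=
  if b == 1 then (1 - a)^-1 * ln s
  else (1 - b)^-1 * (powR s ((1 - b) / (1 - a)) - 1).

Lemma sm_kf (a b : R) (p : 'I_n -> R) : a != 1 ->
  sharma_mittal a b p = kf a b (\sum_i powR (p i) a).
Proof. by move=> a1; rewrite /sharma_mittal (negbTE a1). Qed.

Lemma kf_mono (a b s t : R) : a != 1 -> 0 < s -> s <= t ->
  (a < 1 -> kf a b s <= kf a b t) /\ (1 < a -> kf a b t <= kf a b s).
Proof.
move=> a1 s0 st; rewrite /kf.
have t0 : 0 < t by exact: lt_le_trans st.
case: ifP => [_|/negbT b1].
  have hl : ln s <= ln t by rewrite ler_ln ?posrE.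
  split=> ha.
    have : 0 < (1 - a)^-1 by rewrite invr_gt0; lra.
    nra.
  have : (1 - a)^-1 < 0 by rewrite invr_lt0; lra.
  nra.
set r := (1 - b) / (1 - a).
have H1 : 0 <= r -> powR s r <= powR t r.
  by move=> r0; apply: ge0_ler_powR => //; rewrite nnegrE ltW.
have H2 : r <= 0 -> powR t r <= powR s r.
  by move=> r0; apply: powR_anti.
have bn : 1 - b != 0 by rewrite subr_eq0 eq_sym.
case: (ltgtP (1 - b) 0) => hb; last by move: bn; rewrite hb eqxx.
- have ib : (1 - b)^-1 < 0 by rewrite invr_lt0.
  split=> ha.
    have : r < 0 by rewrite /r pmulr_llt0 // invr_gt0; lra.
    move=> /ltW /H2; nra.
  have : 0 < r by rewrite /r nmulr_lgt0 // invr_lt0; lra.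
  move=> /ltW /H1; nra.
- have ib : 0 < (1 - b)^-1 by rewrite invr_gt0.
  split=> ha.
    have : 0 < r by rewrite /r divr_gt0 //; lra.
    move=> /ltW /H1; nra.
  have : r < 0 by rewrite /r pmulr_rlt0 // invr_lt0; lra.
  move=> /ltW /H2; nra.
Qed.

End D.



Lemma shan_mono (R : realType) (b h1 h2 : R) : h1 <= h2 ->
  (1 - b)^-1 * (expR ((1 - b) * h1) - 1) <= (1 - b)^-1 * (expR ((1 - b) * h2) - 1).
Proof.
move=> h12.
case: (ltgtP (1 - b) 0) => hb; last by rewrite hb invr0 !mul0r.
- have ib : (1 - b)^-1 < 0 by rewrite invr_lt0.
  have : expR ((1 - b) * h2) <= expR ((1 - b) * h1) by rewrite ler_expR; nra.
  nra.
- have ib : 0 < (1 - b)^-1 by rewrite invr_gt0.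
  have : expR ((1 - b) * h1) <= expR ((1 - b) * h2) by rewrite ler_expR; nra.
  nra.
Qed.

Theorem lemma1 (R : realType) (n : nat) (alpha beta : R) :
  (0 <= alpha ->
     schur_concave_on (@prob_vec R n) (sharma_mittal alpha beta)) /\
  (alpha < 0 ->
     schur_convex_on (fun p : 'I_n -> R => prob_vec p /\ pos_vec p)
                     (sharma_mittal alpha beta)).
Proof.
split.
  move=> a0 p q Pp Pq Hm /=; rewrite lerN2.
  case: (eqVneq alpha 1) => [->|a1].
    have He := @ent_le R n p q Pp Pq Hm.
    rewrite /sharma_mittal /= eqxx.
    case: ifP => _ //; exact: (@shan_mono R).
  rewrite (@sm_kf R n alpha beta p a1) (@sm_kf R n alpha beta q a1).
  case: (eqVneq alpha 0) => [->|an0].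
    have -> : \sum_i powR (q i) 0 = \sum_i powR (p i) 0.
      by apply: eq_bigr => i _; rewrite !powRr0.
    exact: le_refl.
  have apos : 0 < alpha by rewrite lt_neqAle eq_sym an0.
  have := a1; rewrite neq_lt => /orP[ha|ha].
    have Hs := @sumpow_lt1 R n alpha p q apos ha Pp Pq Hm.
    exact: (proj1 (@kf_mono R alpha beta _ _ a1 (@sumpow_gt0 R n alpha q Pq) Hs) ha).
  have Hs := @sumpow_gt1 R n alpha p q ha Pp Pq Hm.
  exact: (proj2 (@kf_mono R alpha beta _ _ a1 (@sumpow_gt0 R n alpha p Pp) Hs) ha).
move=> an p q [Pp pp] [Pq pq] Hm.
have a1 : alpha != 1 by rewrite lt_eqF // (lt_trans an) // ltr01.
have ha : alpha < 1 by rewrite (lt_trans an) // ltr01.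
rewrite (@sm_kf R n alpha beta p a1) (@sm_kf R n alpha beta q a1).
have Hs := @sumpow_neg R n alpha p q an Pp Pq pq Hm.
exact: (proj1 (@kf_mono R alpha beta _ _ a1 (@sumpow_gt0 R n alpha p Pp) Hs) ha).
Qed.
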